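(* Let $S$ be the graph obtained from nine pairwise vertex-disjoint copies of $J_3$ by identifying the copies of vertex $a$ into a single vertex $a$ and the copies of vertex $b$ into a single vertex $b$ (so the copies of the edge $ab$ become a single edge $ab$), all other vertices staying distinct. Let $H$ be a subgraph of $S$ with maximum degree at most three that contains no edge incident with $a$. Then $S-E(H)$ contains $K_4$ or a member of $\mathcal{J}$ as a subgraph.
   Context: $J_3$ is the graph with vertex set $\{a,b,c,d,e,f,g,h,i,j,k\}$ and edges $ab$; $ac,ad,ae,af,ag$; $bc,bd,be,bf,bg$; $cd,de,ef,fg$; $ha,hd,he$; $ia,ie,if$; $jb,jd,je$; $kb,ke,kf$. $J_1$ is the graph on $\{a,b,c,d,e\}$ with edges $\{ab,ac,bc,ae,be,cd,de,ad\}$, and $J_2$ is the graph on the same vertices with edges $\{ab,ac,bc,ae,be,cd,de,bd\}$. $\mathcal{J}$ is the class of graphs obtained by taking six pairwise vertex-disjoint graphs, each isomorphic to $J_1$ or $J_2$, and identifying all copies of $a$ into one vertex and all copies of $b$ into one vertex (other vertices distinct). *)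

(* Defs.v *)
From mathcomp Require Import all_boot.
Set Implicit Arguments. Unset Strict Implicit. Unset Printing Implicit Defensive.

(* Small graphs with two distinguished vertices a, b are given on the vertex
   type [bool + 'I_n]:  inl true = a,  inl false = b,  inr v = other vertices. *)
Definition va {n : nat} : bool + 'I_n := inl true.
Definition vb {n : nat} : bool + 'I_n := inl false.
Definition vo {n : nat} (k : nat) : bool + 'I_n.+1 := inr (inord k).

Definition edges_of {T : eqType} (L : seq (T * T)) : rel T :=
  fun x y => ((x, y) \in L) || ((y, x) \in L).

(* J_3 on {a,b,c,d,e,f,g,h,i,j,k}; c..k are vo 0 .. vo 8 *)
Definition J3_edge : rel (bool + 'I_9) :=
  let a := va in let b := vb in
  let c := vo 0 in let d := vo 1 in let e := vo 2 in let f := vo 3 in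
  let g := vo 4 in let h := vo 5 in let i := vo 6 in let j := vo 7 in
  let k := vo 8 in
  edges_of [:: (a, b);
               (a, c); (a, d); (a, e); (a, f); (a, g);
               (b, c); (b, d); (b, e); (b, f); (b, g);
               (c, d); (d, e); (e, f); (f, g);
               (h, a); (h, d); (h, e);
               (i, a); (i, e); (i, f);
               (j, b); (j, d); (j, e);
               (k, b); (k, e); (k, f)].

(* J_1 and J_2 on {a,b,c,d,e}; c,d,e are vo 0, vo 1, vo 2 *)
Definition J1_edge : rel (bool + 'I_3) :=
  let a := va in let b := vb in let c := vo 0 in let d := vo 1 in
  let e := vo 2 in
  edges_of [:: (a, b); (a, c); (b, c); (a, e); (b, e); (c, d); (d, e); (a, d)].

Definition J2_edge : rel (bool + 'I_3) :=
  let a := va in let b := vb in let c := vo 0 in let d := vo 1 in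
  let e := vo 2 in
  edges_of [:: (a, b); (a, c); (b, c); (a, e); (b, e); (c, d); (d, e); (b, d)].

Definition glue_map {m n : nat} (i : 'I_m) (u : bool + 'I_n) : bool + 'I_m * 'I_n :=
  match u with inl x => inl x | inr v => inr (i, v) end.

Definition glue_edge {m n : nat} (E : 'I_m -> rel (bool + 'I_n)) :
  rel (bool + 'I_m * 'I_n) :=
  fun x y => [exists i, exists u, exists v,
                [&& E i u v, glue_map i u == x & glue_map i v == y]].

Definition SV := (bool + 'I_9 * 'I_9)%type.
Definition S_edge : rel SV := glue_edge (fun _ : 'I_9 => J3_edge).
Definition S_a : SV := inl true.

Definition J_edge (sel : 'I_6 -> bool) : rel (bool + 'I_6 * 'I_3) :=
  glue_edge (fun t => if sel t then J1_edge else J2_edge).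

Definition contains_subgraph {U V : finType} (F : rel U) (G : rel V) : Prop :=
  exists f : U -> V, injective f /\ forall x y, F x y -> G (f x) (f y).

Definition K4_edge : rel 'I_4 := fun x y => x != y.

Definition contains_K4_or_J {V : finType} (G : rel V) : Prop :=
  contains_subgraph K4_edge G \/
  exists sel : 'I_6 -> bool, contains_subgraph (J_edge sel) G.

(* Main.v *)
Require Import Defs.
From mathcomp Require Import all_boot.
From Stdlib Require Import Classical IndefiniteDescription.
From mathcomp Require Import zify.

Definition V9 := (bool + 'I_9)%type.
Definition ordm (n k : nat) : 'I_n.+1 := Ordinal (ltn_pmod k (ltn0Sn n)).
Definition vc {n : nat} (k : nat) : bool + 'I_n.+1 := inr (ordm n k).

Lemma inord_ordm n k : k < n.+1 -> inord k = ordm n k.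
Proof. by move=> H; apply: val_inj; rewrite /= inordK // modn_small. Qed.

Definition enO n : seq 'I_n.+1 := map (ordm n) (iota 0 n.+1).
Lemma enOP n (x : 'I_n.+1) : x \in enO n.
Proof.
have -> : x = ordm n x by apply: val_inj; rewrite /= modn_small.
by rewrite /enO map_f // mem_iota /= add0n.
Qed.
Definition enS n : seq (bool + 'I_n.+1) := inl true :: inl false :: map inr (enO n).
Lemma enSP n (x : bool + 'I_n.+1) : x \in enS n.
Proof.
case: x => [[]|v]; rewrite /enS; try by rewrite !inE.
by rewrite 2!in_cons (mem_map (@inr_inj _ _)) enOP !orbT.
Qed.

Definition J3c : rel V9 :=
  let a := va in let b := vb in
  let c := vc 0 in let d := vc 1 in let e := vc 2 in let f := vc 3 in
  let g := vc 4 in let h := vc 5 in let i := vc 6 in let j := vc 7 in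
  let k := vc 8 in
  edges_of [:: (a, b);
               (a, c); (a, d); (a, e); (a, f); (a, g);
               (b, c); (b, d); (b, e); (b, f); (b, g);
               (c, d); (d, e); (e, f); (f, g);
               (h, a); (h, d); (h, e);
               (i, a); (i, e); (i, f);
               (j, b); (j, d); (j, e);
               (k, b); (k, e); (k, f)].
Definition J1c : rel (bool + 'I_3) :=
  let a := va in let b := vb in let c := vc 0 in let d := vc 1 in
  let e := vc 2 in
  edges_of [:: (a, b); (a, c); (b, c); (a, e); (b, e); (c, d); (d, e); (a, d)].
Definition J2c : rel (bool + 'I_3) :=
  let a := va in let b := vb in let c := vc 0 in let d := vc 1 in
  let e := vc 2 in
  edges_of [:: (a, b); (a, c); (b, c); (a, e); (b, e); (c, d); (d, e); (b, d)].

Lemma J3E u v : J3_edge u v = J3c u v.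
Proof. by rewrite /J3_edge /J3c /vo !inord_ordm. Qed.
Lemma J1E u v : J1_edge u v = J1c u v.
Proof. by rewrite /J1_edge /J1c /vo !inord_ordm. Qed.
Lemma J2E u v : J2_edge u v = J2c u v.
Proof. by rewrite /J2_edge /J2c /vo !inord_ordm. Qed.

Definition liftm (psi : 'I_3 -> 'I_9) (u : bool + 'I_3) : V9 :=
  match u with inl x => inl x | inr v => inr (psi v) end.
Definition psi3 (p q s : nat) (v : 'I_3) : 'I_9 :=
  tnth [tuple ordm 8 p; ordm 8 q; ordm 8 s] v.
Definition free_ab (L : seq (V9 * V9)) (u v : V9) :=
  [|| u == va, v == va, u == vb, v == vb, (u,v) \in L | (v,u) \in L].

Definition allpairs_ok {U : eqType} (e : seq U) (P : U -> U -> bool) :=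
  all (fun x => all (fun y => P x y) e) e.
Lemma allpairs_okP {U : eqType} (e : seq U) P :
  (forall x, x \in e) -> allpairs_ok e P -> forall x y, P x y.
Proof. by move=> cov /allP H x y; move/allP: (H x (cov x)); apply. Qed.

Section Local.
Variable r : rel V9.
Hypothesis sym : forall x y, r x y = r y x.
Hypothesis ra : forall y, r va y = false.
Hypothesis rb : forall y, r vb y = false.

Lemma free_ok L : all (fun p => ~~ r p.1 p.2) L ->
  forall u v, free_ab L u v -> ~~ r u v.
Proof.
move=> /allP HL u v.
case/orP => [/eqP->|]; first by rewrite ra.
case/orP => [/eqP->|]; first by rewrite sym ra.
case/orP => [/eqP->|]; first by rewrite rb.
case/orP => [/eqP->|]; first by rewrite sym rb.
case/orP => [/HL //|]; by rewrite sym => /HL.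
Qed.

Definition K4l := exists phi : 'I_4 -> V9, injective phi /\
  forall x y, K4_edge x y -> J3_edge (phi x) (phi y) && ~~ r (phi x) (phi y).
Definition Jl := exists s : bool, exists psi : 'I_3 -> 'I_9, injective psi /\
  forall x y, (if s then J1_edge else J2_edge) x y ->
   J3_edge (liftm psi x) (liftm psi y) && ~~ r (liftm psi x) (liftm psi y).

Definition phiK (p q : nat) (x : 'I_4) : V9 := tnth [tuple va; vb; vc p; vc q] x.
Definition checkK p q :=
  allpairs_ok (enO 3) (fun x y => (phiK p q x == phiK p q y) ==> (x == y)) &&
  allpairs_ok (enO 3) (fun x y => K4_edge x y ==>
     J3c (phiK p q x) (phiK p q y) && free_ab [:: (vc p, vc q)] (phiK p q x) (phiK p q y)).

Lemma K4_ok p q : r (vc p) (vc q) = false -> checkK p q -> K4l.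
Proof.
move=> Hpq /andP [C1 C2]; exists (phiK p q); split.
  move=> x y E; apply/eqP; by move: (@allpairs_okP _ _ _ (@enOP 3) C1 x y); rewrite E eqxx.
move=> x y Exy; move: (@allpairs_okP _ _ _ (@enOP 3) C2 x y); rewrite Exy J3E /=.
case/andP=> -> /free_ok -> //=; by rewrite Hpq.
Qed.

Definition Jc (s : bool) := if s then J1c else J2c.
Definition checkJ s p q t L :=
  allpairs_ok (enO 2) (fun x y => (psi3 p q t x == psi3 p q t y) ==> (x == y)) &&
  allpairs_ok (enS 2) (fun x y => Jc s x y ==>
     J3c (liftm (psi3 p q t) x) (liftm (psi3 p q t) y) &&
     free_ab L (liftm (psi3 p q t) x) (liftm (psi3 p q t) y)).

Lemma J_ok s p q t L : all (fun p => ~~ r p.1 p.2) L -> checkJ s p q t L -> Jl.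
Proof.
move=> HL /andP [C1 C2]; exists s, (psi3 p q t); split.
  move=> x y E; apply/eqP; by move: (@allpairs_okP _ _ _ (@enOP 2) C1 x y); rewrite E eqxx.
move=> x y Exy; move: (@allpairs_okP _ _ _ (@enSP 2) C2 x y).
have -> : Jc s x y by move: Exy; rewrite /Jc; case: (s); rewrite ?J1E ?J2E.
by rewrite /= J3E => /andP [-> /(@free_ok L HL) ->].
Qed.

Lemma no4 (T : finType) (rr : rel T) x y1 y2 y3 y4 :
  #|[set y | rr x y]| <= 3 -> uniq [:: y1; y2; y3; y4] ->
  ~~ [&& rr x y1, rr x y2, rr x y3 & rr x y4].
Proof.
move=> D U; apply/negP => /and4P [h1 h2 h3 h4].
suff : 4 <= #|[set y | rr x y]| by rewrite leqNgt ltnS D.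
have <- : size [:: y1; y2; y3; y4] = 4 by [].
rewrite -(card_uniqP U); apply: subset_leq_card; apply/subsetP => y.
by rewrite !inE => /or4P [] /eqP ->.
Qed.

Lemma bool_core hd he jd je ie if_ ke kf :
  ~~ (hd && jd) -> ~~ (if_ && kf) ->
  ~~ (he && ie) -> ~~ (he && je) -> ~~ (he && ke) ->
  ~~ (ie && je) -> ~~ (ie && ke) -> ~~ (je && ke) ->
  [|| ~~ hd && ~~ he, ~~ jd && ~~ je, ~~ ie && ~~ if_ | ~~ ke && ~~ kf].
Proof. by case: hd; case: he; case: jd; case: je; case: ie; case: if_; case: ke; case: kf. Qed.

Hypothesis deg : forall x, #|[set y | r x y]| <= 3.

Lemma local : K4l \/ Jl.
Proof.
case Hcd : (r (vc 0) (vc 1)); last by left; apply: (@K4_ok _ _ Hcd); vm_compute.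
case Hde : (r (vc 1) (vc 2)); last by left; apply: (@K4_ok _ _ Hde); vm_compute.
case Hef : (r (vc 2) (vc 3)); last by left; apply: (@K4_ok _ _ Hef); vm_compute.
case Hfg : (r (vc 3) (vc 4)); last by left; apply: (@K4_ok _ _ Hfg); vm_compute.
right.
have Cd := @no4 _ r (vc 1) (vc 0) (vc 2) (vc 5) (vc 7) (deg _) isT.
rewrite sym Hcd Hde (sym _ (vc 5)) (sym _ (vc 7)) /= in Cd.
have Cf := @no4 _ r (vc 3) (vc 2) (vc 4) (vc 6) (vc 8) (deg _) isT.
rewrite sym Hef Hfg (sym _ (vc 6)) (sym _ (vc 8)) /= in Cf.
have Ce : forall x y, uniq [:: @vc 8 1; vc 3; vc x; vc y] ->
    ~~ (r (vc x) (vc 2) && r (vc y) (vc 2)).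
  move=> x y U.
  have := @no4 _ r (vc 2) _ _ _ _ (deg _) U.
  by rewrite sym Hde Hef (sym _ (vc x)) (sym _ (vc y)).
case/or4P: (@bool_core _ _ _ _ _ _ _ _ Cd Cf (Ce 5 6 isT) (Ce 5 7 isT)
   (Ce 5 8 isT) (Ce 6 7 isT) (Ce 6 8 isT) (Ce 7 8 isT))
   => /andP [/negbTE H1 /negbTE H2].
- by apply: (@J_ok true 1 5 2 [:: (vc 5, vc 1); (vc 5, vc 2)]); [rewrite /= H1 H2 | vm_compute].
- by apply: (@J_ok false 1 7 2 [:: (vc 7, vc 1); (vc 7, vc 2)]); [rewrite /= H1 H2 | vm_compute].
- by apply: (@J_ok true 2 6 3 [:: (vc 6, vc 2); (vc 6, vc 3)]); [rewrite /= H1 H2 | vm_compute].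
- by apply: (@J_ok false 2 8 3 [:: (vc 8, vc 2); (vc 8, vc 3)]); [rewrite /= H1 H2 | vm_compute].
all: by vm_compute.
Qed.
End Local.

Lemma glue_inj m n (i : 'I_m) : injective (@glue_map m n i).
Proof. by move=> [x|x] [y|y] //= [] // => [->|->]. Qed.

Lemma S_glue (i : 'I_9) u v : J3_edge u v -> S_edge (glue_map i u) (glue_map i v).
Proof.
move=> E; rewrite /S_edge /glue_edge; apply/existsP; exists i; apply/existsP; exists u; apply/existsP; exists v.
by rewrite E !eqxx.
Qed.

Lemma S_noloop x : S_edge x x = false.
Proof.
apply/negbTE/negP; rewrite /S_edge /glue_edge.
case/existsP => i; case/existsP => u; case/existsP => v; case/and3P => E /eqP e1 /eqP e2.
have uv : u = v by apply: (@glue_inj _ _ i); rewrite e1 e2.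
subst v; move: E; rewrite J3E.
have := @allpairs_okP _ (enS 8) (fun x y => (x == y) ==> ~~ J3c x y) (@enSP 8) _ u u.
by rewrite eqxx => /(_ (_ : true)) /negbTE ->; vm_compute.
Qed.


Definition Jprop (r : rel V9) (p : bool * ('I_3 -> 'I_9)) :=
  injective p.2 /\ forall x y, (if p.1 then J1_edge else J2_edge) x y ->
   J3_edge (liftm p.2 x) (liftm p.2 y) && ~~ r (liftm p.2 x) (liftm p.2 y).

Theorem corollary4 (h : rel SV) :
  (forall x y, h x y = h y x) ->
  (forall x y, h x y -> S_edge x y) ->
  (forall x : SV, #|[set y | h x y]| <= 3) ->
  (forall y : SV, ~~ h S_a y) ->
  contains_K4_or_J (fun x y => S_edge x y && ~~ h x y).
Proof.
move=> hsym hS hdeg ha.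
pose B := [set i : 'I_9 | [exists v, h (inl false) (inr (i, v))]].
have cB : #|B| <= 3.
  pose f (i : 'I_9) : SV := inr (i, odflt ord0 [pick v | h (inl false) (inr (i, v))]).
  have finj : injective f by move=> i j [].
  rewrite -(card_imset _ finj); apply: leq_trans (hdeg (inl false)); apply: subset_leq_card.
  apply/subsetP => z /imsetP [i]; rewrite /B inE => /existsP Hi ->; rewrite inE /f.
  case: pickP => [v Hv|H] /=; first by [].
  by case: Hi => v; rewrite H.
have cC : 6 <= #|~: B|.
  have := cardsC B; rewrite card_ord; lia.
pose g (t : 'I_6) : 'I_9 := enum_val (widen_ord cC t).
have ginj : injective g by move=> s t /enum_val_inj /(congr1 val) /= /val_inj.
have gB t : g t \notin B by have := enum_valP (widen_ord cC t); rewrite inE.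
pose r t : rel V9 := fun u v => h (glue_map (g t) u) (glue_map (g t) v).
have loc t : K4l (r t) \/ Jl (r t).
  apply: local.
  - by move=> x y; apply: hsym.
  - by move=> y; apply/negbTE; apply: ha.
  - move=> [[]|v].
    + by rewrite /r /= hsym; apply/negbTE; apply: ha.
    + by apply/negbTE/negP => /hS; rewrite /= S_noloop.
    + by move: (gB t); rewrite inE negb_exists => /forallP /(_ v) /negbTE.
  - move=> x; apply: leq_trans (hdeg (glue_map (g t) x)).
    rewrite -(card_imset _ (@glue_inj _ _ (g t))).
    apply: subset_leq_card; apply/subsetP => z /imsetP [y]; rewrite inE => Hy ->.
    by rewrite inE.
case: (classic (exists t, K4l (r t))) => [[t [phi [phinj Hphi]]]|NK].
  left; exists (glue_map (g t) \o phi); split.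
    exact: inj_comp (@glue_inj _ _ _) phinj.
  by move=> x y /Hphi /andP [E N]; rewrite /= S_glue.
have HJ t : exists p, Jprop (r t) p.
  case: (loc t) => [K|[s [psi Hp]]]; first by case: NK; exists t.
  by exists (s, psi).
pose F t := proj1_sig (constructive_indefinite_description _ (HJ t)).
have HF t : Jprop (r t) (F t) := proj2_sig (constructive_indefinite_description _ (HJ t)).
right; exists (fun t => (F t).1).
pose Phi (u : bool + 'I_6 * 'I_3) : SV :=
  match u with inl x => inl x | inr (t, v) => inr (g t, (F t).2 v) end.
exists Phi; split.
  move=> [x|[t v]] [y|[s w]] //=; first by case=> ->.
  case=> /ginj E; subst s => /(proj1 (HF t)) -> //.
move=> x y /existsP [t /existsP [u /existsP [v /and3P [E /eqP <- /eqP <-]]]].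
have PhiE w : Phi (glue_map t w) = glue_map (g t) (liftm (F t).2 w) by case: w.
rewrite !PhiE; case/andP: ((proj2 (HF t)) u v E) => E3 N.
by rewrite S_glue.
Qed.
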